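(* Let $(p,l)$ be an irregular pair with $\Delta_{(p,l)}\neq0$. Let $r\ge2$ be an integer and let $(p,s_1,\ldots,s_r)\in\widehat{\Psi}^{\rm irr}_r$ be the associated pair of the irregular pair of order $r$ corresponding to $(p,l)$. For $u\ge1$ let $(p,l_u)$ be the irregular pair of order $u$ corresponding to $(p,l)$, and let $A(p^u)=\min_{k\in\mathbb{N}_0}\{m=l_u+k\varphi(p^u): \operatorname{num}(B_m/m)/\operatorname{num}(B_m/(m(m-1)))=p^u\}$. If $(p,s_1,s_2,\ldots,s_r)\neq(p,l,l-1,\ldots,l-1)$, then $A(p^u)$ has no solution (the set is empty) for all $u\ge r$.
   Context: $B_n$ denotes the $n$-th Bernoulli number ($\frac{z}{e^z-1}=\sum_{n\ge0}B_n\frac{z^n}{n!}$); $\operatorname{num}(r)$ is the numerator of a rational number $r$ in lowest terms; $\varphi$ is Euler's function. For an odd prime $p$, $(p,l)$ is an irregular pair if $l$ is even, $2\le l\le p-3$ and $p\mid B_l$. For $n\ge1$, $(p,l)$ is an irregular pair of order $n$ if $l$ is even, $2\le l<\varphi(p^n)$ and $p^n\mid B_l/l$; the set of these is $\Psi^{\rm irr}_n$. For $(p,l)\in\Psi^{\rm irr}_n$ write $l=\sum_{\nu=1}^n s_\nu\varphi(p^{\nu-1})$ with $0\le s_\nu<p$; $(p,s_1,\ldots,s_n)$ is the associated pair and the set of these is $\widehat{\Psi}^{\rm irr}_n$. For an irregular pair $(p,l)$, $\Delta_{(p,l)}$ is the integer in $[0,p)$ with $\Delta_{(p,l)}\equiv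 p^{-1}\left(\frac{B_{l+\varphi(p)}}{l+\varphi(p)}-\frac{B_l}{l}\right)\pmod p$. Known fact (from earlier work): if $\Delta_{(p,l)}\neq0$, there is a unique sequence $(s_\nu)_{\nu\ge1}$ with $s_1=l$ and $(p,s_1,\ldots,s_n)\in\widehat{\Psi}^{\rm irr}_n$ for every $n\ge1$; the corresponding pair $(p,l_n)$ with $l_n=\sum_{\nu=1}^n s_\nu\varphi(p^{\nu-1})$ is the irregular pair of order $n$ corresponding to $(p,l)$. *)

(* Defs.v *)
From mathcomp Require Import all_boot all_order all_algebra.
Set Implicit Arguments. Unset Strict Implicit. Unset Printing Implicit Defensive.
Import Order.TTheory GRing.Theory Num.Theory.
Local Open Scope ring_scope.

(* Bernoulli numbers B_n (z/(e^z-1) convention, B_1 = -1/2), via the standard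
   recurrence  B_0 = 1,  B_n = -1/(n+1) * sum_{k<n} C(n+1,k) B_k. *)
Fixpoint bern_list (n : nat) : seq rat :=
  match n with
  | 0 => [:: 1]
  | n'.+1 => let s := bern_list n' in
      rcons s (- (n'.+2)%:R^-1 * \sum_(k < n'.+1) ('C(n'.+2, k))%:R * nth 0 s k)
  end.

Definition bernoulli (n : nat) : rat := nth 0 (bern_list n) n.

(* residue mod p (in [0,p)) of a rational with denominator prime to p,
   computed as num * den^(p-2) mod p (Fermat inverse) *)
Definition ratmodp (p : nat) (x : rat) : int :=
  ((numq x * (denq x) ^+ (p - 2)%N) %% p%:Z)%Z.

Definition irregular_pair (p l : nat) : Prop :=
  [/\ prime p, odd p, ~~ odd l, (2 <= l <= p - 3)%N
    & (p%:Z %| numq (bernoulli l))%Z].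

Definition irregular_pair_order (n p l : nat) : Prop :=
  [/\ prime p /\ odd p, (1 <= n)%N, ~~ odd l, (2 <= l < totient (p ^ n))%N
    & ((p ^ n)%N%:Z %| numq (bernoulli l / l%:R))%Z].

Definition lsum (p : nat) (s : nat -> nat) (n : nat) : nat :=
  (\sum_(1 <= nu < n.+1) s nu * totient (p ^ nu.-1))%N.

Definition assoc_pair_order (n p : nat) (s : nat -> nat) : Prop :=
  (forall nu, (1 <= nu <= n)%N -> (s nu < p)%N) /\
  irregular_pair_order n p (lsum p s n).

Definition Delta (p l : nat) : int :=
  ratmodp p ((bernoulli (l + (p - 1)) / (l + (p - 1))%:R
              - bernoulli l / l%:R) / p%:R).

Definition numratio (m : nat) : rat :=
  (numq (bernoulli m / m%:R))%:~R / (numq (bernoulli m / (m * (m - 1))%N%:R))%:~R.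

(* Main.v *)
Require Import Defs.
From mathcomp Require Import all_boot all_order all_algebra ring zify.
Import Order.TTheory GRing.Theory Num.Theory.
Local Open Scope ring_scope.
Set Implicit Arguments.
Lemma ratio_dvd (m u p : nat) : prime p -> (0 < u)%N ->
  numratio m = ((p ^ u)%N)%:R -> (p ^ u %| m.-1)%N.
Proof.
Local Open Scope ring_scope.
move=> pp u0; rewrite /numratio.
set x := bernoulli m / m%:R.
set y := bernoulli m / (m * (m - 1))%N%:R.
move=> H.
have hb : numq y != 0.
  apply/eqP=> b0; move: H; rewrite b0 rmorph0 invr0 mulr0 => /esym/eqP.
  by rewrite pnatr_eq0 expn_eq0 (negbTE (lt0n_neq0 (prime_gt0 pp))) ?andbF ?andFb.
have m1 : (m - 1)%N != 0%N.
  apply: contra hb => /eqP h; rewrite /y h muln0 invr0 mulr0; done.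
have hy : y = x / (m - 1)%N%:R by rewrite /y /x natrM invfM mulrA.
have ha : numq x = (p ^ u)%N%:Z * numq y.
  apply/eqP; rewrite -(eqr_int rat) rmorphM /=.
  rewrite (_ : ((p ^ u)%N%:Z)%:~R = (p^u)%:R :> rat) //.
  rewrite -H divfK //; by rewrite intr_eq0.
have he : numq x * denq y = numq y * (m - 1)%N%:Z * denq x.
  apply/eqP; rewrite -(eqr_int rat) !rmorphM /= !numqE.
  rewrite (_ : ((m - 1)%N%:Z)%:~R = (m - 1)%:R :> rat) //.
  set dx := (denq x)%:~R; set dy := (denq y)%:~R.
  have hx : x = y * (m - 1)%:R by rewrite hy divfK // pnatr_eq0.
  rewrite hx; apply/eqP; ring.
have h2 : (p^u)%N%:Z * denq y = (m-1)%N%:Z * denq x.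
  apply: (mulfI hb); move: he; rewrite ha => he.
  by rewrite mulrA (mulrC (numq y)) he mulrA.
have h3 := congr1 absz h2; rewrite !abszM /= in h3.
have cp := coprime_num_den x; rewrite ha abszM /= coprimeMl in cp.
case/andP: cp => cp _.
rewrite -subn1 -(Gauss_dvdl _ cp) -h3; exact: dvdn_mulr.
Qed.
Local Open Scope nat_scope.
Lemma lsum1 p s : lsum p s 1 = s 1%N.
Proof. by rewrite /lsum big_nat1 expn0 muln1. Qed.

Local Open Scope nat_scope.
Lemma lsumS p s n : prime p ->
  lsum p s n.+2 = lsum p s n.+1 + s n.+2 * (p.-1 * p ^ n).
Proof.
move=> pp; rewrite /lsum big_nat_recr //= totient_pfactor //.
Qed.

Local Open Scope nat_scope.
Lemma lsum_ge p s n : prime p -> s 1%N <= lsum p s n.+1.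
Proof.
move=> pp; elim: n => [|n IH]; first by rewrite lsum1.
rewrite lsumS //; exact: leq_trans IH (leq_addr _ _).
Qed.

Local Open Scope nat_scope.
Lemma key p l s : prime p -> 2 <= l -> l.-1 < p -> s 1%N = l ->
  (forall j, 1 <= j -> s j < p) ->
  forall n, (p ^ n %| lsum p s n.+1 - 1) ->
    (forall j, 2 <= j <= n.+1 -> s j = l.-1) /\ lsum p s n.+1 - 1 = l.-1 * p ^ n.
Proof.
move=> pp l2 lp s1 sp; elim=> [|n IH].
  move=> _; split; first by move=> j; lia.
  by rewrite lsum1 s1 expn0 muln1 subn1.
have A1 : 1 <= lsum p s n.+1 by rewrite (leq_trans _ (@lsum_ge p s n pp)) // s1; lia.
rewrite lsumS // addnC -addnBA // => hd.
have hd' : p ^ n %| lsum p s n.+1 - 1.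
  rewrite -(dvdn_addl _ (_ : p ^ n %| s n.+2 * (p.-1 * p ^ n))).
    by rewrite addnC; apply: dvdn_trans hd; rewrite expnS dvdn_mull.
  by rewrite mulnA dvdn_mull.
have [IHd IHe] := IH hd'.
have p0 : 0 < p ^ n by rewrite expn_gt0 prime_gt0.
have eq1 : s n.+2 * (p.-1 * p ^ n) + (lsum p s n.+1 - 1) = p ^ n * (s n.+2 * p.-1 + l.-1).
  by rewrite IHe; nia.
rewrite eq1 expnS [p * _]mulnC dvdn_pmul2l // in hd.
have hs : s n.+2 = l.-1.
  have e2 : s n.+2 * p.-1 + l.-1 + s n.+2 = s n.+2 * p + l.-1.
    have : p = p.-1.+1 by rewrite prednK // prime_gt0.
    move=> ->; rewrite /=; lia.
  have := congr1 (modn^~ p) e2.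
  rewrite -modnDml (eqP hd) add0n modnMDl !modn_small //.
  by apply: sp.
split.
  move=> j hj; case: (ltnP j n.+2) => hj2; first by apply: IHd; lia.
  by have -> : j = n.+2 by lia.
by rewrite eq1 hs expnS; nia.
Qed.

Local Open Scope ring_scope.
Theorem corollary3p5 (p l r : nat) (s : nat -> nat) :
  irregular_pair p l ->
  Delta p l != 0 ->
  (2 <= r)%N ->
  s 1%N = l ->
  (forall n : nat, (1 <= n)%N -> assoc_pair_order n p s) ->
  (exists2 nu : nat, (2 <= nu <= r)%N & s nu <> l.-1) ->
  forall u : nat, (r <= u)%N ->
    ~ (exists k : nat,
         numratio (lsum p s u + k * totient (p ^ u))%N = ((p ^ u)%N)%:R).
Proof.
move=> [pp op el /andP[l2 lp3] _] _ r2 s1 hA [nu hnu hsnu] u ru [k hk].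
have sp : forall j, (1 <= j)%N -> (s j < p)%N.
  by move=> j hj; have [h _] := hA j hj; apply: h; rewrite hj leqnn.
have lp : (l.-1 < p)%N by lia.
have u0 : (0 < u)%N by lia.
have hd := @ratio_dvd _ _ _ pp u0 hk.
move: hd; case: u ru u0 hk => [|n] ru _ _ //.
rewrite totient_pfactor // -pred_Sn => hd.
have A1 : (1 <= lsum p s n.+1)%N by rewrite (leq_trans _ (@lsum_ge p s n pp)) // s1; lia.
have hd' : (p ^ n %| lsum p s n.+1 - 1)%N.
  rewrite -(dvdn_addl _ (_ : p ^ n %| k * (p.-1 * p ^ n))%N).
    have -> : (lsum p s n.+1 - 1 + k * (p.-1 * p ^ n) = (lsum p s n.+1 + k * (p.-1 * p ^ n)).-1)%N by lia.
    by apply: dvdn_trans hd; rewrite expnS dvdn_mull.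
  by rewrite mulnA dvdn_mull.
have [hj _] := @key p l s pp l2 lp s1 sp n hd'.
by apply: hsnu; apply: hj; lia.
Qed.
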